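(* $\mathbb{T}$ satisfies Axiom A, witnessed by the orderings $q\leq_n p$ iff $q\leq p$ and the sets of splitting levels $A_q$ and $A_p$ coincide on their first $n+1$ elements.
   Context: $\mathbb{T}$ is the tree-forcing (ordered by inclusion) consisting of perfect trees $p\subseteq 3^{<\omega}$ together with a set $A_p\subseteq\omega$ (the splitting levels of $p$) such that: for every $t\in p$, $|t|\in A_p$ iff $t$ is a splitting node of $p$; every splitting node $t$ is fully splitting (i.e. $t^\frown i\in p$ for every $i\in 3$); for every $s\supseteq \mathrm{stem}(p)$ which is not splitting, $s^\frown 2\notin p$; and for all non-splitting $s,t\in p$ with $|s|=|t|$ and all $i\in 2$, $s^\frown i\in p\Leftrightarrow t^\frown i\in p$. Here $s^\frown i$ denotes the sequence $s$ extended by the value $i$, and $\mathrm{stem}(p)$ is the longest node of $p$ comparable with every node of $p$. *)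

(* Defs.v *)
From mathcomp Require Import all_boot.
Set Implicit Arguments. Unset Strict Implicit. Unset Printing Implicit Defensive.

Definition node := seq 'I_3.
Definition tree3 := node -> Prop.

Definition two : 'I_3 := @Ordinal 3 2 isT.

Definition splitting (p : tree3) (t : node) : Prop :=
  exists i j : 'I_3, i <> j /\ p (rcons t i) /\ p (rcons t j).

Definition is_tree (p : tree3) : Prop :=
  p [::] /\ (forall s t : node, prefix s t -> p t -> p s).

Definition perfect (p : tree3) : Prop :=
  is_tree p /\ forall t, p t -> exists s, prefix t s /\ p s /\ splitting p s.

Definition comparable (s t : node) : Prop := prefix s t \/ prefix t s.

Definition is_stem (p : tree3) (st : node) : Prop :=
  p st /\ (forall t, p t -> comparable st t) /\
  (forall s, p s -> (forall t, p t -> comparable s t) -> size s <= size st).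

Record Tcond := mkT { tr : tree3 ; lev : nat -> Prop }.

Definition inT (c : Tcond) : Prop :=
  let p := tr c in let A := lev c in
  [/\ perfect p,
      (forall t, p t -> (A (size t) <-> splitting p t)),
      (forall t, p t -> splitting p t -> forall i : 'I_3, p (rcons t i)),
      (forall st s, is_stem p st -> prefix st s -> p s -> ~ splitting p s ->
          ~ p (rcons s two)) &
      (forall s t, p s -> p t -> ~ splitting p s -> ~ splitting p t ->
          size s = size t -> forall i : 'I_3, i < 2 ->
          (p (rcons s i) <-> p (rcons t i)))].

Definition Tle (q p : Tcond) : Prop := forall t, tr q t -> tr p t.

(** is_nth A k a : a is the k-th element (counting from 0) of A in increasing order *)
Fixpoint is_nth (A : nat -> Prop) (k a : nat) : Prop :=
  match k with
  | 0 => A a /\ forall b, b < a -> ~ A b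
  | k'.+1 => A a /\ exists a', [/\ a' < a, is_nth A k' a' &
                                  forall b, a' < b -> b < a -> ~ A b]
  end.

Definition Tle_n (n : nat) (q p : Tcond) : Prop :=
  Tle q p /\ forall k, k <= n -> forall a, is_nth (lev q) k a <-> is_nth (lev p) k a.

(** Axiom A (Baumgartner), for a forcing notion given by its set of conditions
    [cond] and order [le] (q <= p means q is stronger), witnessed by [len]. *)
Definition compatible {P : Type} (cond : P -> Prop) (le : P -> P -> Prop) (p q : P) :=
  exists r, [/\ cond r, le r p & le r q].

Definition antichain {P : Type} (cond : P -> Prop) (le : P -> P -> Prop) (W : P -> Prop) :=
  (forall r, W r -> cond r) /\
  (forall r r', W r -> W r' -> r <> r' -> ~ compatible cond le r r').

Definition countable_set {P : Type} (S : P -> Prop) :=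
  exists f : nat -> P, forall x, S x -> exists k, f k = x.

Definition AxiomA {P : Type} (cond : P -> Prop) (le : P -> P -> Prop)
  (len : nat -> P -> P -> Prop) : Prop :=
      (forall n p, cond p -> len n p p) /\
      (forall n p q r, cond p -> cond q -> cond r -> len n r q -> len n q p -> len n r p) /\
      (forall p q, cond p -> cond q -> len 0 q p -> le q p) /\
      (forall n p q, cond p -> cond q -> len n.+1 q p -> len n q p) /\
      (forall f : nat -> P, (forall n, cond (f n)) -> (forall n, len n (f n.+1) (f n)) ->
         exists q, cond q /\ forall n, len n q (f n)) /\
      (forall p n (W : P -> Prop), cond p -> antichain cond le W ->
         exists q, [/\ cond q, len n q p &
                    countable_set (fun r => W r /\ compatible cond le r q)]).

(* Main.v *)
Require Import Defs.
From mathcomp Require Import all_boot.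
From Stdlib Require Import Classical ClassicalEpsilon FunctionalExtensionality PropExtensionality.
Set Implicit Arguments. Unset Strict Implicit. Unset Printing Implicit Defensive.

Lemma least_ex (P : nat -> Prop) : (exists m, P m) -> exists m, P m /\ forall b, b < m -> ~ P b.
Proof.
move=> [m Pm]; apply: NNPP => H.
suff: forall k, forall b, b < k -> ~ P b by move/(_ m.+1 m (ltnSn m)).
elim=> [//|k IH] b; rewrite ltnS leq_eqVlt => /orP [/eqP -> Pk| /IH //].
by apply: H; exists k; split.
Qed.

Lemma nth_in X k a : is_nth X k a -> X a.
Proof. by case: k => [[]|k []]. Qed.

Lemma nth_ext X Y k a : (forall m, m <= a -> (X m <-> Y m)) -> is_nth X k a -> is_nth Y k a.
Proof.
elim: k a => [|k IH] a E /=.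
  move=> [Xa H]; split; first by apply/E.
  by move=> b ba Yb; apply: (H b ba); apply/E => //; apply: ltnW.
move=> [Xa [a' [a'a Ha' H]]]; split; first by apply/E.
exists a'; split => //.
  apply: IH Ha' => m ma'; apply: E; apply: leq_trans ma' (ltnW a'a).
by move=> b a'b ba Yb; apply: (H b a'b ba); apply/E => //; apply: ltnW.
Qed.

Lemma nth_uniq X k a a' : is_nth X k a -> is_nth X k a' -> a = a'.
Proof.
elim: k a a' => [|k IH] a a' /=.
  move=> [Xa Ha] [Xa' Ha']; case: (ltngtP a a') => // h.
  - by case: (Ha' _ h).
  - by case: (Ha _ h).
move=> [Xa [b [ba Hb Hab]]] [Xa' [b' [ba' Hb' Hab']]].
have eb := IH _ _ Hb Hb'; subst b'.
case: (ltngtP a a') => // h.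
- by case: (Hab' _ ba h).
- by case: (Hab _ ba' h).
Qed.

Lemma nth_lt X k k' a a' : is_nth X k a -> is_nth X k' a' -> k < k' -> a < a'.
Proof.
elim: k' a' => [//|k' IH] a' Ha /= [Xa' [b [ba' Hb _]]].
rewrite ltnS leq_eqVlt => /orP [/eqP ek|kk'].
  subst k'; by rewrite (nth_uniq Ha Hb).
by apply: ltn_trans (IH _ Ha Hb kk') ba'.
Qed.

Lemma nth_le X k k' a a' : is_nth X k a -> is_nth X k' a' -> k <= k' -> a <= a'.
Proof.
move=> Ha Ha'; rewrite leq_eqVlt => /orP [/eqP ek|kk'].
  by subst k'; rewrite (nth_uniq Ha Ha').
by apply: ltnW; apply: nth_lt Ha Ha' kk'.
Qed.

Lemma nth_geq X k a : is_nth X k a -> k <= a.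
Proof.
elim: k a => [//|k IH] a /= [_ [b [ba Hb _]]].
by apply: leq_ltn_trans (IH _ Hb) ba.
Qed.

Definition infinite (X : nat -> Prop) := forall m, exists m', m <= m' /\ X m'.

Lemma nth_exists X : infinite X -> forall k, exists a, is_nth X k a.
Proof.
move=> inf; elim=> [|k [a Ha]].
  have [m [Xm Hm]] := least_ex (ex_intro _ _ (proj2 (svalP (constructive_indefinite_description _ (inf 0))))).
  by exists m.
have [m1 [am1 Xm1]] := inf a.+1.
have [m [[am Xm] Hm]] := least_ex (P := fun m => a < m /\ X m) (ex_intro _ m1 (conj am1 Xm1)).
exists m; split => //; exists a; split => // b ab bm Xb.
by apply: (Hm b bm).
Qed.

Lemma nth_count X m : X m -> exists j, is_nth X j m.
Proof.
pose Q m := (exists b, b < m /\ X b) -> exists j c, [/\ is_nth X j c, c < m & forall d, c < d -> d < m -> ~ X d].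
have R : forall m, Q m -> X m -> exists j, is_nth X j m.
  move=> m0 Qm Xm.
  case: (classic (exists b, b < m0 /\ X b)) => [/Qm [j [c [Hc cm H]]]|nb].
    by exists j.+1; split => //; exists c; split.
  exists 0; split => // b bm Xb; apply: nb; by exists b.
suff: forall m, Q m by move=> H; apply: R.
elim=> [|k IH]; first by move=> [b []].
move=> [b [bk Xb]].
case: (classic (X k)) => Xk.
  have [j Hj] := R _ IH Xk.
  by exists j, k; split => // d kd dk; move: (leq_trans kd dk); rewrite ltnn.
have bk' : b < k.
  move: bk; rewrite ltnS leq_eqVlt => /orP [/eqP ebk|//]; by subst b.
have [j [c [Hc ck H]]] := IH (ex_intro _ b (conj bk' Xb)).
exists j, c; split => //; first by apply: ltnW.
move=> d cd; rewrite ltnS leq_eqVlt => /orP [/eqP ->//|]; by apply: H.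
Qed.


Definition dig (b : bool) : 'I_3 := if b then @Ordinal 3 1 isT else @Ordinal 3 0 isT.
Definition pat := nat -> option bool.

Definition allowed (s : node) (g : pat) (i : nat) (x : 'I_3) : Prop :=
  if i < size s then x = nth ord0 s i
  else match g i with None => True | Some b => x = dig b end.

Definition good (s : node) (g : pat) (t : node) : Prop :=
  forall i, i < size t -> allowed s g i (nth ord0 t i).

Definition levOf (s : node) (g : pat) (m : nat) : Prop := size s <= m /\ g m = None.
Definition valid (s : node) (g : pat) : Prop :=
  g (size s) = None /\ forall m, exists m', m <= m' /\ g m' = None.
Definition rep s g := mkT (good s g) (levOf s g).

Lemma good_nil s g : good s g [::].
Proof. by move=> i. Qed.

Lemma good_rcons s g t x : good s g (rcons t x) <-> good s g t /\ allowed s g (size t) x.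
Proof.
split.
  move=> H; split.
    move=> i it; have := H i; rewrite size_rcons nth_rcons it; apply; exact: ltnW.
  by have := H (size t); rewrite size_rcons nth_rcons ltnn eqxx; apply.
move=> [H1 H2] i; rewrite size_rcons nth_rcons ltnS leq_eqVlt => /orP [/eqP ->|it].
  by rewrite ltnn eqxx.
by rewrite it; apply: H1.
Qed.

Lemma prefix_nth (s t : node) i : prefix s t -> i < size s -> nth ord0 s i = nth ord0 t i.
Proof. rewrite prefixE => /eqP E hi; by rewrite -{1}E nth_take. Qed.

Lemma good_prefix s g u t : prefix u t -> good s g t -> good s g u.
Proof.
move=> ut H i iu; rewrite (prefix_nth ut iu); apply: H.
exact: leq_trans iu (size_prefix ut).
Qed.

Definition fill (s : node) (g : pat) (i : nat) : 'I_3 :=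
  if i < size s then nth ord0 s i else match g i with None => ord0 | Some b => dig b end.

Lemma allowed_fill s g i : allowed s g i (fill s g i).
Proof. by rewrite /allowed /fill; case: (i < size s) => //; case: (g i). Qed.

Definition ext (s : node) (g : pat) (t : node) (m : nat) : node :=
  t ++ [seq fill s g i | i <- iota (size t) (m - size t)].

Lemma size_ext s g t m : size t <= m -> size (ext s g t m) = m.
Proof. by move=> tm; rewrite size_cat size_map size_iota subnKC. Qed.

Lemma prefix_ext s g t m : prefix t (ext s g t m).
Proof. exact: prefix_prefix. Qed.

Lemma good_ext s g t m : good s g t -> good s g (ext s g t m).
Proof.
move=> H i; rewrite size_cat size_map size_iota nth_cat => hi.
case: ifP => it; first by apply: H.
have hi' : i - size t < m - size t by rewrite ltn_subLR // leqNgt it.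
rewrite (nth_map 0); last by rewrite size_iota.
rewrite nth_iota // subnKC; last by rewrite leqNgt it.
exact: allowed_fill.
Qed.

Definition one3 : 'I_3 := @Ordinal 3 1 isT.

Lemma allowed_lt s g i x : i < size s -> allowed s g i x <-> x = nth ord0 s i.
Proof. by rewrite /allowed => ->. Qed.

Lemma allowed_ge s g i x : size s <= i ->
  allowed s g i x <-> match g i with None => True | Some b => x = dig b end.
Proof. by rewrite /allowed leqNgt => /negbTE ->. Qed.

Lemma good_splitting s g t : good s g t ->
  (splitting (good s g) t <-> size s <= size t /\ g (size t) = None).
Proof.
move=> gt; split.
  move=> [i [j [ij [/good_rcons [_ Hi] /good_rcons [_ Hj]]]]].
  case: (ltnP (size t) (size s)) => st.
    by move: Hi Hj ij; rewrite !allowed_lt // => -> -> [].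
  split => //; move: Hi Hj; rewrite !allowed_ge //.
  by move: ij; case: (g (size t)) => // b ij E1 E2; case: ij; rewrite E1 E2.
move=> [st gn]; exists ord0, one3; split => //.
split; apply/good_rcons; split => //; by rewrite allowed_ge // gn.
Qed.

Lemma good_take s g t : good s g t -> size t <= size s -> t = take (size t) s.
Proof.
move=> gt ts; apply: (@eq_from_nth _ ord0); first by rewrite size_take_min; apply/esym/minn_idPl.
move=> i it; rewrite nth_take //.
by have := gt i it; rewrite allowed_lt //; apply: leq_trans ts.
Qed.

Lemma good_comparable s g t : good s g t -> Defs.comparable s t.
Proof.
move=> gt; case: (leqP (size t) (size s)) => ts.
  by right; rewrite (good_take gt ts); apply: prefix_take.
left; rewrite prefixE; apply/eqP.
apply: (@eq_from_nth _ ord0); first by rewrite size_take_min; apply/minn_idPl/ltnW.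
move=> i; rewrite size_take_min => hi.
have is_ : i < size s by move: hi; rewrite (minn_idPl (ltnW ts)).
rewrite nth_take //; have := gt i (leq_trans is_ (ltnW ts)); by rewrite allowed_lt.
Qed.

Lemma good_self s g : good s g s.
Proof. by move=> i hi; rewrite allowed_lt. Qed.

Lemma rep_inT s g : valid s g -> inT (rep s g).
Proof.
move=> [gs ginf]; rewrite /inT /=; split.
- split; first split.
  + exact: good_nil.
  + by move=> u t ut; apply: good_prefix.
  move=> t gt.
  have [m [hm gm]] := ginf (maxn (size t) (size s)).
  exists (ext s g t m); split; first exact: prefix_ext.
  split; first exact: good_ext.
  apply/good_splitting; first exact: good_ext.
  rewrite size_ext; last by apply: leq_trans hm; apply: leq_maxl.
  by split => //; apply: leq_trans hm; apply: leq_maxr.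
- move=> t gt; rewrite good_splitting //.
- move=> t gt /good_splitting => /(_ gt) [st gn] i; apply/good_rcons; split => //.
  by rewrite allowed_ge // gn.
- move=> st u [_ [_ Hst]] stu gu nsp /good_rcons [_].
  have ss : size s <= size st.
    by apply: Hst; [apply: good_self | move=> t; apply: good_comparable].
  have su : size s <= size u by apply: leq_trans ss (size_prefix stu).
  rewrite allowed_ge //.
  case E: (g (size u)) => [b|]; last by case: nsp; apply/good_splitting.
  by case: b {E} => /(congr1 (@nat_of_ord 3)).
- move=> t u gt gu _ _ e i _; rewrite !good_rcons e; tauto.
Qed.


Lemma comparable_nth (u v : node) i : Defs.comparable u v -> i < size u -> i < size v ->
  nth ord0 u i = nth ord0 v i.
Proof.
case=> h iu iv; first by apply: prefix_nth.
by apply/esym/prefix_nth.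
Qed.

Lemma prefix_size_eq (u v : node) : prefix u v -> size u = size v -> u = v.
Proof. by rewrite prefixE => /eqP E e; rewrite -E e take_size. Qed.

Lemma ord3_cases (x : 'I_3) : x <> two -> exists b, x = dig b.
Proof.
case: x => [[|[|[|m]]] hx] // h.
- by exists false; apply: val_inj.
- by exists true; apply: val_inj.
- by case: h; apply: val_inj.
Qed.

Section Extract.
Variable c : Tcond.
Hypothesis hc : inT c.
Let p := tr c.
Let A := lev c.

Lemma tree_nil : p [::].
Proof. by case: hc => [[[]]]. Qed.

Lemma tree_prefix u t : prefix u t -> p t -> p u.
Proof. by case: hc => [[[_ H] _]] _ _ _ _; apply: H. Qed.

Lemma cond2 t : p t -> (A (size t) <-> splitting p t).
Proof. by case: hc => _ H _ _ _; apply: H. Qed.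

Lemma cond3 t : p t -> splitting p t -> forall i, p (rcons t i).
Proof. by case: hc => _ _ H _ _; apply: H. Qed.

Lemma tree_succ t : p t -> exists x, p (rcons t x).
Proof.
move=> pt; case: hc => [[_ H]] _ _ _ _.
have [s [ts [ps [i [j [_ [pi _]]]]]]] := H t pt.
case: (ltnP (size t) (size s)) => h.
  exists (nth ord0 s (size t)); apply: (tree_prefix _ ps).
  move: ts; rewrite prefixE => /eqP E.
  by rewrite -{1}E -take_nth //; apply: prefix_take.
have ets : t = s by apply: prefix_size_eq => //; apply/eqP; rewrite eqn_leq h size_prefix.
by exists i; rewrite ets.
Qed.

Lemma tree_level m : exists t, p t /\ size t = m.
Proof.
elim: m => [|m [t [pt st]]]; first by exists [::]; split => //; exact: tree_nil.
have [x px] := tree_succ pt; exists (rcons t x); by rewrite size_rcons st.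
Qed.

Lemma lev_inf : infinite A.
Proof.
move=> m; have [t [pt st]] := tree_level m.
case: hc => [[_ H]] _ _ _ _.
have [s [ts [ps sp]]] := H t pt.
exists (size s); split; first by rewrite -st; apply: size_prefix.
by apply/cond2.
Qed.

Lemma lev_ex : exists a, A a /\ forall b, b < a -> ~ A b.
Proof. apply: least_ex; have [m [_ Am]] := lev_inf 0; by exists m. Qed.

Definition a0 := proj1_sig (constructive_indefinite_description _ lev_ex).
Lemma a0P : A a0 /\ forall b, b < a0 -> ~ A b.
Proof. exact: (proj2_sig (constructive_indefinite_description _ lev_ex)). Qed.

Lemma uniq_low m : m <= a0 -> forall s t, p s -> p t -> size s = m -> size t = m -> s = t.
Proof.
elim: m => [|m IH] ma s t ps pt.
  by move=> /size0nil -> /size0nil ->.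
case/lastP: s ps => [|s x] ps; first by [].
case/lastP: t pt => [|t y] pt; first by [].
rewrite !size_rcons => [[es] [et]].
have ps' : p s by apply: tree_prefix ps; apply: prefix_rcons.
have pt' : p t by apply: tree_prefix pt; apply: prefix_rcons.
have est : s = t by apply: IH => //; apply: ltnW.
subst t; case: (classic (x = y)) => [-> //|xy].
have : A (size s) by apply/cond2 => //; exists x, y.
move=> As; have := proj2 a0P (size s); rewrite es => /(_ ma) H; by case: H; rewrite -es.
Qed.

Definition sig0 := proj1_sig (constructive_indefinite_description _ (tree_level a0)).
Lemma sig0P : p sig0 /\ size sig0 = a0.
Proof. exact: (proj2_sig (constructive_indefinite_description _ (tree_level a0))). Qed.

Lemma take_sig0 t : p t -> size t <= a0 -> t = take (size t) sig0.
Proof.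
move=> pt ta; apply: (uniq_low ta) => //.
  by apply: (tree_prefix (prefix_take _ _)); apply: (proj1 sig0P).
by rewrite size_take_min; apply/minn_idPl; rewrite (proj2 sig0P).
Qed.

Lemma sig0_prefix t : p t -> a0 <= size t -> prefix sig0 t.
Proof.
move=> pt at_.
have pta : p (take a0 t) by apply: tree_prefix pt; apply: prefix_take.
have e := take_sig0 pta; rewrite size_take_min (minn_idPl at_) in e; have {}e := e (leqnn _).
rewrite prefixE (proj2 sig0P); apply/eqP; rewrite e.
by rewrite -(proj2 sig0P) take_size.
Qed.

Lemma sig0_stem : is_stem p sig0.
Proof.
split; first exact: (proj1 sig0P).
split.
  move=> t pt; case: (leqP (size t) a0) => h.
    by right; rewrite (take_sig0 pt h); apply: prefix_take.
  by left; apply: sig0_prefix => //; apply: ltnW.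
move=> s ps H; rewrite (proj2 sig0P) leqNgt; apply/negP => h.
have sp : splitting p sig0 by apply/cond2; [exact: (proj1 sig0P)|rewrite (proj2 sig0P); exact: (proj1 a0P)].
have p0 := cond3 (proj1 sig0P) sp ord0.
have p1 := cond3 (proj1 sig0P) sp one3.
have := comparable_nth (H _ p0) h; rewrite size_rcons (proj2 sig0P) => /(_ (leqnn _)).
have := comparable_nth (H _ p1) h; rewrite size_rcons (proj2 sig0P) => /(_ (leqnn _)).
by rewrite !nth_rcons (proj2 sig0P) ltnn eqxx => ->.
Qed.

Definition D i b := forall t, p t -> size t = i -> p (rcons t (dig b)) /\ forall x, p (rcons t x) -> x = dig b.

Lemma D_ex i : a0 <= i -> ~ A i -> exists b, D i b.
Proof.
move=> ai nA; have [u [pu su]] := tree_level i.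
have [x px] := tree_succ pu.
have nsu : ~ splitting p u by move/(cond2 pu); rewrite su.
have x2 : x <> two.
  move=> ex; subst x; case: hc => _ _ _ H _.
  by apply: (H sig0 u sig0_stem (sig0_prefix pu _) pu nsu px); rewrite su.
have [b xb] := ord3_cases x2; exists b => t pt st.
have nst : ~ splitting p t by move/(cond2 pt); rewrite st.
have ptb : p (rcons t (dig b)).
  case: hc => _ _ _ _ H; rewrite -xb; apply/(H u t pu pt nsu nst _ x) => //.
  + by rewrite su st.
  + by rewrite xb; case: b {xb}.
split => // y py; case: (classic (y = dig b)) => // yb.
by case: nst; exists y, (dig b).
Qed.

Definition gx (i : nat) : option bool :=
  match excluded_middle_informative (A i) with
  | left _ => None
  | right _ => match excluded_middle_informative (exists b, D i b) with
               | left H => Some (proj1_sig (constructive_indefinite_description _ H))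
               | right _ => Some false end end.

Lemma gx_None i : gx i = None <-> A i.
Proof.
rewrite /gx; case: excluded_middle_informative => // nA; split => //.
by case: excluded_middle_informative.
Qed.

Lemma gx_Some i b : a0 <= i -> gx i = Some b -> D i b.
Proof.
rewrite /gx => ai; case: excluded_middle_informative => // nA.
case: excluded_middle_informative => [H [<-]|H]; first exact: (proj2_sig (constructive_indefinite_description _ H)).
by case: H; apply: D_ex.
Qed.

Lemma tree_eq t : p t <-> good sig0 gx t.
Proof.
elim/last_ind: t => [|t x IH]; first by split => _; [exact: good_nil|exact: tree_nil].
rewrite good_rcons -IH; split.
  move=> ptx; have pt : p t by apply: tree_prefix ptx; apply: prefix_rcons.
  split => //; case: (ltnP (size t) a0) => h.
    rewrite allowed_lt ?(proj2 sig0P) //.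
    have := take_sig0 ptx; rewrite size_rcons => /(_ h) e.
    by have := congr1 (fun s => nth ord0 s (size t)) e; rewrite nth_rcons ltnn eqxx nth_take.
  rewrite allowed_ge ?(proj2 sig0P) //.
  case E: (gx (size t)) => [b|] //.
  by have [_] := gx_Some h E pt erefl; apply.
move=> [pt al]; case: (ltnP (size t) a0) => h.
  move: al; rewrite allowed_lt ?(proj2 sig0P) // => ->.
  rewrite {1}(take_sig0 pt (ltnW h)) -take_nth ?(proj2 sig0P) //.
  by apply: tree_prefix (proj1 sig0P); apply: prefix_take.
move: al; rewrite allowed_ge ?(proj2 sig0P) //.
case E: (gx (size t)) => [b|] al.
  by rewrite al; apply: (proj1 (gx_Some h E pt erefl)).
by apply: cond3 => //; apply/cond2 => //; apply/gx_None.
Qed.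

Lemma lev_eq m : A m <-> levOf sig0 gx m.
Proof.
rewrite /levOf (proj2 sig0P) gx_None; split => [Am|[]//]; split => //.
by rewrite leqNgt; apply/negP => h; apply: (proj2 a0P _ h).
Qed.

Lemma extract_valid : valid sig0 gx.
Proof.
split; first by apply/gx_None; rewrite (proj2 sig0P); exact: (proj1 a0P).
move=> m; have [m' [mm' Am']] := lev_inf m; exists m'; split => //; exact/gx_None.
Qed.
End Extract.

Lemma inT_rep c : inT c -> exists s g, valid s g /\ c = rep s g.
Proof.
move=> hc; exists (@sig0 c hc), (@gx c); split; first exact: extract_valid.
have E1 : tr c = good (@sig0 c hc) (@gx c).
  apply: functional_extensionality => t; apply: propositional_extensionality; exact: tree_eq.
have E2 : lev c = levOf (@sig0 c hc) (@gx c).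
  apply: functional_extensionality => t; apply: propositional_extensionality; exact: lev_eq.
rewrite /rep -E1 -E2; by case: c {hc E1 E2}.
Qed.


Lemma dig_inj : injective dig.
Proof. by case=> [] [] // /(congr1 (@nat_of_ord 3)). Qed.

Lemma dig_two b : dig b <> two.
Proof. by case: b => /(congr1 (@nat_of_ord 3)). Qed.

Lemma allowed_mono s g t h i x : (forall u, good t h u -> good s g u) ->
  size t <= i -> allowed t h i x -> allowed s g i x.
Proof.
move=> inc ti al.
have G : good t h (rcons (ext t h t i) x).
  apply/good_rcons; split; first exact/good_ext/good_self.
  by rewrite size_ext.
by have /good_rcons [_] := inc _ G; rewrite size_ext.
Qed.

Lemma pw_None s g t h i : (forall u, good t h u -> good s g u) ->
  size s <= i -> size t <= i -> h i = None -> g i = None.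
Proof.
move=> inc si ti hi.
have := allowed_mono (x := two) inc ti; rewrite !allowed_ge // hi => /(_ I).
by case: (g i) => // b /esym /dig_two.
Qed.

Lemma pw_Some s g t h i b : (forall u, good t h u -> good s g u) ->
  size s <= i -> size t <= i -> g i = Some b -> h i = Some b.
Proof.
move=> inc si ti gi.
case E: (h i) => [b'|]; last by rewrite (pw_None inc si ti E) in gi.
have := allowed_mono (x := dig b') inc ti; rewrite !allowed_ge // E gi => /(_ erefl).
by move/dig_inj ->.
Qed.

Lemma nth0_lev s g a : valid s g -> (is_nth (levOf s g) 0 a <-> a = size s).
Proof.
move=> [gs _]; split.
  move=> [[sa _] H]; apply/eqP; rewrite eqn_leq sa andbT leqNgt; apply/negP => h.
  by apply: (H _ h).
move=> ->; split => // b bs [sb _]; by move: (leq_trans bs sb); rewrite ltnn.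
Qed.

Lemma valid_inf s g : valid s g -> infinite (levOf s g).
Proof.
move=> [gs H] m; have [m' [mm' gm']] := H (maxn m (size s)).
exists m'; split; first by apply: leq_trans mm'; apply: leq_maxl.
by split => //; apply: leq_trans mm'; apply: leq_maxr.
Qed.

Lemma inT_rep' c : inT c -> {sg : node * pat | valid sg.1 sg.2 /\ c = rep sg.1 sg.2}.
Proof.
move=> hc; apply: constructive_indefinite_description.
have [s [g H]] := inT_rep hc; by exists (s, g).
Qed.

Lemma chain (f : nat -> Tcond) : (forall n, Tle_n n (f n.+1) (f n)) ->
  forall n n', n <= n' -> Tle (f n') (f n) /\
   forall k, k <= n -> forall a, is_nth (lev (f n')) k a <-> is_nth (lev (f n)) k a.
Proof.
move=> hf n n' /subnKC <-; elim: (n' - n) => [|d [IH1 IH2]]; first by rewrite addn0; split => // t.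
rewrite addnS; have [H1 H2] := hf (n + d); split.
  by move=> t /H1 /IH1.
move=> k kn a; have kd : k <= n + d := leq_trans kn (leq_addr _ _).
by split => H; [apply/(IH2 k kn)/(H2 k kd) | apply/(H2 k kd)/(IH2 k kn)].
Qed.

Lemma fusion (f : nat -> Tcond) : (forall n, inT (f n)) -> (forall n, Tle_n n (f n.+1) (f n)) ->
  exists q, inT q /\ forall n, Tle_n n q (f n).
Proof.
move=> hf hle.
pose S n := (proj1_sig (inT_rep' (hf n))).1.
pose G n := (proj1_sig (inT_rep' (hf n))).2.
have VS n : valid (S n) (G n) by exact: (proj1 (proj2_sig (inT_rep' (hf n)))).
have ES n : f n = rep (S n) (G n) by exact: (proj2 (proj2_sig (inT_rep' (hf n)))).
have CH := chain hle.
have SS n : S n = S 0.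
  have [H1 H2] := CH 0 n (leq0n _).
  have e : size (S n) = size (S 0).
    have h1 : is_nth (lev (f n)) 0 (size (S n)) by rewrite ES; apply/(nth0_lev _ (VS n)).
    by have := proj1 (H2 0 (leqnn _) _) h1; rewrite ES => /(nth0_lev _ (VS 0)).
  have : good (S 0) (G 0) (S n) by move: (H1 (S n)); rewrite !ES /rep /=; apply; apply: good_self.
  by move/good_take; rewrite e => /(_ (leqnn _)); rewrite take_size.
have [s {}SS] : exists s, forall n, S n = s by exists (S 0).
have EF n : f n = rep s (G n) by rewrite ES SS.
have VG n : valid s (G n) by rewrite -(SS n).
have INC n n' : n <= n' -> forall u, good s (G n') u -> good s (G n) u.
  by move=> nn' u; have [H1 _] := CH n n' nn'; move: (H1 u); rewrite !EF /rep.
clear ES VS SS.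
have PN n n' i : n <= n' -> size s <= i -> G n' i = None -> G n i = None.
  by move=> nn' si; apply: (pw_None (INC n n' nn')).
have PS n n' i b : n <= n' -> size s <= i -> G n i = Some b -> G n' i = Some b.
  by move=> nn' si; apply: (pw_Some (INC n n' nn')).
have AG n n' i b b' : size s <= i -> G n i = Some b -> G n' i = Some b' -> b = b'.
  move=> si h1 h2.
  have := PS _ _ _ _ (leq_maxl n n') si h1; rewrite (PS _ _ _ _ (leq_maxr n n') si h2).
  by case.
pose g i := match excluded_middle_informative (exists nb : nat * bool, G nb.1 i = Some nb.2) with
  | left H => Some (proj1_sig (constructive_indefinite_description _ H)).2
  | right _ => None end.
have gN i : g i = None <-> forall n, G n i = None.
  rewrite /g; case: excluded_middle_informative => [[[n b] /= H]|H]; split => //.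
    by move/(_ n); rewrite H.
  move=> _ n; case E: (G n i) => [b|] //; case: H; by exists (n, b).
have gS i b : g i = Some b -> exists n, G n i = Some b.
  rewrite /g; case: excluded_middle_informative => // H [<-].
  set nb := proj1_sig _; exists nb.1; exact: (proj2_sig (constructive_indefinite_description _ H)).
have AL i x : allowed s g i x <-> forall n, allowed s (G n) i x.
  case: (ltnP i (size s)) => si.
    by split => [H n|H]; [rewrite allowed_lt // -(allowed_lt g) | have := H 0; rewrite !allowed_lt].
  case E: (g i) => [b|].
    have [n0 En0] := gS _ _ E.
    rewrite allowed_ge // E; split.
      move=> -> n; rewrite allowed_ge //; case E': (G n i) => [b'|] //.
      by rewrite (AG _ _ _ _ _ si En0 E').
    by move/(_ n0); rewrite allowed_ge // En0.
  move: (proj1 (gN i) E) => H; split => [_ n|_]; first by rewrite allowed_ge // H.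
  by rewrite allowed_ge // E.
have GD t : good s g t <-> forall n, good s (G n) t.
  split => [H n i it|H i it]; first exact: (proj1 (AL _ _) (H i it) n).
  by apply/AL => n; apply: H.
have VGs : valid s g.
  split.
    by apply/gN => n; case: (VG n).
  move=> m; have [am Ham] := nth_exists (valid_inf (VG m)) m.
  exists am; split; first exact: nth_geq Ham.
  apply/gN => n; case: (leqP m n) => mn.
    have [_ H2] := CH m n mn; have := proj2 (H2 m (leqnn _) am); rewrite !EF => /(_ Ham).
    by move/nth_in => [].
  by move: (nth_in Ham) => [h1 h2]; apply: (PN _ _ _ (ltnW mn) h1 h2).
exists (rep s g); split; first exact: rep_inT.
move=> n; rewrite EF; split; first by move=> t H; exact: (proj1 (GD t) H n).
have [b Hb] := nth_exists (valid_inf (VG n)) n.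
have AGR m : m <= b -> (levOf s g m <-> levOf s (G n) m).
  move=> mb; split.
    move=> [sm gm]; split => //; exact: (proj1 (gN m) gm n).
  move=> Lm; have [j Hj] := nth_count Lm.
  have jn : j <= n.
    rewrite leqNgt; apply/negP => nj; have := nth_lt Hb Hj nj; by rewrite ltnNge mb.
  split; first by case: Lm.
  apply/gN => n'; case: (leqP n n') => nn'.
    have [_ H2] := CH n n' nn'; have := proj2 (H2 j jn m); rewrite !EF => /(_ Hj).
    by move/nth_in => [].
  by apply: (PN _ _ _ (ltnW nn')); case: Lm.
move=> k kn a; split => H.
  have Hb' : is_nth (levOf s g) n b by apply: nth_ext Hb => m mb; apply: iff_sym; apply: AGR.
  have ab := nth_le H Hb' kn.
  by apply: nth_ext H => m ma; apply: AGR; apply: leq_trans ma ab.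
have ab := nth_le H Hb kn.
by apply: nth_ext H => m ma; apply: iff_sym; apply: AGR; apply: leq_trans ma ab.
Qed.


Definition nodesL (L : nat) : seq node := [seq val t | t : L.-tuple 'I_3].
Lemma mem_nodesL (t : node) : t \in nodesL (size t).
Proof.
rewrite /nodesL; have := map_f (fun u : (size t).-tuple 'I_3 => val u) (mem_enum predT (in_tuple t)).
by apply.
Qed.
Lemma nodesL_size L t : t \in nodesL L -> size t = L.
Proof. by move=> /mapP [u _ ->]; rewrite size_tuple. Qed.

Lemma comparable_sym u v : Defs.comparable u v -> Defs.comparable v u.
Proof. by case; [right|left]. Qed.

Lemma good_restrict t h u : good t h u -> size t <= size u -> forall v, good u h v -> good t h v.
Proof.
move=> gu tu v gv i iv; have := gv i iv.
case: (ltnP i (size u)) => iu.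
  by rewrite allowed_lt // => ->; apply: gu.
rewrite allowed_ge // => H; rewrite allowed_ge //; exact: leq_trans tu iu.
Qed.

Lemma Tle_n_agree s g g' N L : is_nth (levOf s g) N L -> (forall m, m <= L -> g' m = g m) ->
  (forall t, good s g' t -> good s g t) -> Tle_n N (rep s g') (rep s g).
Proof.
move=> HL E inc; split => //.
have AG m : m <= L -> (levOf s g' m <-> levOf s g m) by move=> mL; rewrite /levOf E.
have HL' : is_nth (levOf s g') N L by apply: nth_ext HL => m mL; apply: iff_sym; apply: AG.
move=> k kN a; split => H.
  have aL := nth_le H HL' kN; by apply: nth_ext H => m ma; apply: AG; apply: leq_trans ma aL.
have aL := nth_le H HL kN; by apply: nth_ext H => m ma; apply: iff_sym; apply: AG; apply: leq_trans ma aL.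
Qed.

Lemma Tle_n_trans N q r p : Tle_n N q r -> Tle_n N r p -> Tle_n N q p.
Proof.
move=> [H1 H2] [H3 H4]; split; first by move=> t /H1 /H3.
by move=> k kN a; split => H; [apply/(H4 k kN)/(H2 k kN) | apply/(H2 k kN)/(H4 k kN)].
Qed.

Lemma Tle_n_weaken N N' q p : N' <= N -> Tle_n N q p -> Tle_n N' q p.
Proof. move=> NN [H1 H2]; split => // k kN; apply: H2; exact: leq_trans kN NN. Qed.

Section Construction.
Variables (s : node) (g0 : pat) (n : nat) (W : Tcond -> Prop).
Hypothesis v0 : valid s g0.

Definition Pc (g : pat) (tau : node) (h : pat) : Prop :=
  [/\ valid tau h, (forall u, good tau h u -> good s g u) & exists w, W w /\ Tle (rep tau h) w].

Definition step (g : pat) (tau : node) : pat :=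
  match excluded_middle_informative (exists h, Pc g tau h) with
  | left H => let h := proj1_sig (constructive_indefinite_description _ H) in
              fun m => if m <= size tau then g m else h m
  | right _ => g end.

Lemma step_agree g tau m : m <= size tau -> step g tau m = g m.
Proof. by rewrite /step => mt; case: excluded_middle_informative => //= H; rewrite mt. Qed.

Lemma step_sub g tau : size s <= size tau -> forall t, good s (step g tau) t -> good s g t.
Proof.
rewrite /step => st; case: excluded_middle_informative => // H.
set h := proj1_sig _; have [vh inc _] : Pc g tau h := proj2_sig (constructive_indefinite_description _ H).
move=> t gt i it; have := gt i it.
case: (ltnP i (size s)) => si; first by rewrite !allowed_lt.
rewrite !allowed_ge //; case: (leqP i (size tau)) => iu; first by [].
move=> al.
have := allowed_mono (x := nth ord0 t i) inc (ltnW iu); rewrite !allowed_ge //; last exact: ltnW.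
by apply.
Qed.

Lemma step_valid g tau : size s <= size tau -> valid s g -> valid s (step g tau).
Proof.
move=> st [gs ginf]; split; first by rewrite step_agree.
rewrite /step; case: excluded_middle_informative => // H.
set h := proj1_sig _; have [[_ hinf] _ _] : Pc g tau h := proj2_sig (constructive_indefinite_description _ H).
move=> m; have [m' [mm' hm']] := hinf (maxn m (size tau).+1).
exists m'; split; first by apply: leq_trans mm'; apply: leq_maxl.
have : (size tau).+1 <= m' by apply: leq_trans mm'; apply: leq_maxr.
by rewrite ltnNge => /negbTE ->.
Qed.

Lemma step_win g tau : size s <= size tau -> (exists h, Pc g tau h) ->
  exists w, W w /\ forall t, good s (step g tau) t -> Defs.comparable t tau -> tr w t.
Proof.
rewrite /step => st H0; case: excluded_middle_informative => // H.
set h := proj1_sig _; have [[hn _] inc [w [Ww Hw]]] : Pc g tau h := proj2_sig (constructive_indefinite_description _ H).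
exists w; split => // t gt ct; apply: Hw => i it /=.
case: (ltnP i (size tau)) => iu.
  rewrite allowed_lt //; apply: comparable_nth => //.
case: (leqP i (size tau)) => iu'.
  have -> : i = size tau by apply/eqP; rewrite eqn_leq iu iu'.
  by rewrite allowed_ge // hn.
have si : size s <= i := leq_trans st (ltnW iu').
move: (gt i it); rewrite (allowed_ge _ _ si) (allowed_ge _ _ (ltnW iu')).
by rewrite leqNgt iu'.
Qed.
End Construction.


Section Fold.
Variables (s : node) (W : Tcond -> Prop).

Definition sweep g l := foldl (step s W) g l.

Lemma sweep_props L l g : (forall tau, tau \in l -> size tau = L) -> size s <= L -> valid s g ->
 [/\ valid s (sweep g l), (forall m, m <= L -> sweep g l m = g m),
     (forall t, good s (sweep g l) t -> good s g t) &
     forall tau, tau \in l -> forall h, valid tau h -> (forall u, good tau h u -> good s (sweep g l) u) ->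
       (exists w, W w /\ Tle (rep tau h) w) ->
       exists w, W w /\ forall t, good s (sweep g l) t -> Defs.comparable t tau -> tr w t].
Proof.
elim: l g => [|tau l IH] g Hl sL vg.
  by split => // tau.
have stau : size tau = L by apply: Hl; rewrite inE eqxx.
have st : size s <= size tau by rewrite stau.
have Hl1 : forall t, t \in l -> size t = L by move=> t tl; apply: Hl; rewrite inE tl orbT.
have [V1 A1 S1 W1] := IH (step s W g tau) Hl1 sL (step_valid W st vg).
have -> : sweep g (tau :: l) = sweep (step s W g tau) l by [].
split => //.
- by move=> m mL; rewrite A1 // step_agree // stau.
- by move=> t /S1 /step_sub; apply.
move=> tau'; rewrite inE => /orP [/eqP ->|tl]; last exact: W1.
move=> h vh inc ex.
have [w [Ww Hw]] := step_win (W := W) (g := g) st (ex_intro _ h (And3 vh (fun u gu => step_sub st (S1 _ (inc u gu))) ex)).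
by exists w; split => // t gt; apply: Hw; apply: S1.
Qed.
End Fold.

Section Stage.
Variables (s : node) (g0 : pat) (n : nat) (W : Tcond -> Prop).
Hypothesis v0 : valid s g0.

Definition lvl k g := epsilon (inhabits 0) (fun a => is_nth (levOf s g) (n + k) a).
Lemma lvl_spec k g : valid s g -> is_nth (levOf s g) (n + k) (lvl k g).
Proof. move=> vg; apply: epsilon_spec; exact: nth_exists (valid_inf vg) _. Qed.

Fixpoint Gs k := match k with 0 => g0 | k'.+1 => sweep s W (Gs k') (nodesL (lvl k' (Gs k'))) end.

Lemma Gs_valid k : valid s (Gs k).
Proof.
elim: k => [//|k IH] /=.
have [sL _] := nth_in (lvl_spec k IH).
by have [] := sweep_props W (@nodesL_size _) sL IH.
Qed.

Lemma Gs_le k : Tle_n (n + k) (rep s (Gs k.+1)) (rep s (Gs k)).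
Proof.
have IH := Gs_valid k; have HL := lvl_spec k IH.
have [sL _] := nth_in HL.
have [_ A _ _] := sweep_props W (@nodesL_size _) sL IH.
by apply: Tle_n_agree HL A _; case: (sweep_props W (@nodesL_size _) sL IH).
Qed.

Lemma Gs_win k tau : size tau = lvl k (Gs k) -> forall h, valid tau h ->
  (forall u, good tau h u -> good s (Gs k.+1) u) -> (exists w, W w /\ Tle (rep tau h) w) ->
  exists w, W w /\ forall t, good s (Gs k.+1) t -> Defs.comparable t tau -> tr w t.
Proof.
move=> e; have IH := Gs_valid k; have HL := lvl_spec k IH.
have [sL _] := nth_in HL.
have [_ _ _ H] := sweep_props W (@nodesL_size _) sL IH.
by apply: H; rewrite -e; apply: mem_nodesL.
Qed.
End Stage.


Lemma clause6 (p : Tcond) (n : nat) (W : Tcond -> Prop) : inT p -> antichain inT Tle W ->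
  exists q, [/\ inT q, Tle_n n q p & countable_set (fun r => W r /\ compatible inT Tle r q)].
Proof.
move=> hp [WT Wanti].
have [s [g0 [v0 ep]]] := inT_rep hp.
pose f k := rep s (Gs s g0 n W k).
have VF k : valid s (Gs s g0 n W k) by apply: Gs_valid.
have hf k : inT (f k) by apply: rep_inT.
have hle k : Tle_n k (f k.+1) (f k).
  by apply: (Tle_n_weaken (leq_addl n k)); apply: Gs_le.
have [q [hq Hq]] := fusion hf hle.
have CH k d : Tle_n (n + k) (f (k + d)) (f k).
  elim: d => [|d IH]; first by rewrite addn0; split => // t.
  rewrite addnS; apply: Tle_n_trans IH.
  apply: (Tle_n_weaken (N := n + (k + d))); first by rewrite leq_add2l leq_addr.
  exact: Gs_le.
have QF k : Tle_n (n + k) q (f k).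
  apply: Tle_n_trans (Hq (n + k)) _; by have := CH k n; rewrite (addnC k n).
have KEY : forall x, W x -> compatible inT Tle x q -> exists tau : node,
    (exists w', W w' /\ forall t, tr q t -> Defs.comparable t tau -> tr w' t) /\
    (exists r2, [/\ inT r2, Tle r2 x & forall t, tr r2 t -> tr q t /\ Defs.comparable t tau]).
  move=> x Wx [r [hr rx rq]].
  have [t' [h' [vh' er]]] := inT_rep hr.
  have [sq [gq [vq eq]]] := inT_rep hq.
  have [Ln HLn] := nth_exists (valid_inf vq) n.
  have [m [mm hm]] := proj2 vh' (maxn (size t') Ln).
  pose tau := ext t' h' t' m.
  have stau : size tau = m by rewrite size_ext //; apply: leq_trans mm; apply: leq_maxl.
  have gtau : good t' h' tau by apply/good_ext/good_self.
  have vt : valid tau h' by split; [rewrite stau | exact: (proj2 vh')].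
  have r2r : forall u, good tau h' u -> tr r u.
    move=> u gu; rewrite er; apply: (good_restrict gtau _ gu); rewrite stau; apply: leq_trans mm; apply: leq_maxl.
  have r2q : forall u, good tau h' u -> tr q u by move=> u /r2r /rq.
  have Lm : levOf sq gq m.
    rewrite -stau; apply/good_splitting.
      by have := r2q _ (@good_self tau h'); rewrite eq.
    exists ord0, one3; split => //; split; [move: (r2q (rcons tau ord0)) | move: (r2q (rcons tau one3))];
      rewrite eq; apply; apply/good_rcons; split; try exact: good_self; by rewrite allowed_ge // stau hm.
  have [j Hj] := nth_count Lm.
  have nj : n <= j.
    rewrite leqNgt; apply/negP => jn; have := nth_lt Hj HLn jn.
    by rewrite ltnNge; move: mm; rewrite geq_max => /andP [_ ->].
  set k := j - n; have ejk : j = n + k by rewrite subnKC.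
  have Hm : is_nth (lev (f k)) (n + k) m.
    have [_ H2] := QF k; apply/(H2 (n + k) (leqnn _)); rewrite eq -ejk; exact: Hj.
  have elv : size tau = lvl s n k (Gs s g0 n W k).
    have Hm2 : is_nth (levOf s (Gs s g0 n W k)) (n + k) m := Hm.
    have Hl2 := lvl_spec n k (VF k).
    rewrite stau; exact (nth_uniq Hm2 Hl2).
  have [w' [Ww' Hw']] := Gs_win v0 elv vt (fun u gu => proj1 (QF k.+1) _ (r2q u gu))
    (ex_intro _ x (conj Wx (fun u gu => rx _ (r2r u gu)))).
  exists tau; split.
    exists w'; split => // t qt ct; apply: Hw' => //; exact: (proj1 (QF k.+1) t qt).
  exists (rep tau h'); split; first exact: rep_inT.
    by move=> u gu; apply: rx; apply: r2r.
  move=> u gu; split; first exact: r2q.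
  by apply: comparable_sym; apply: good_comparable gu.
exists q; split => //.
  by have := QF 0; rewrite addn0 ep.
pose F k := match (unpickle k : option (seq 'I_3)) with
  | Some tau => epsilon (inhabits p) (fun w => W w /\ forall t, tr q t -> Defs.comparable t tau -> tr w t)
  | None => p end.
exists F => x [Wx cx].
have [tau [[w' Hw'] [r2 [hr2 r2x r2q]]]] := KEY x Wx cx.
exists (pickle (tau : seq 'I_3)); rewrite /F pickleK.
set w := epsilon _ _.
have [Ww Hw] : W w /\ forall t, tr q t -> Defs.comparable t tau -> tr w t.
  exact: (@epsilon_spec _ (inhabits p) (fun w0 => W w0 /\ forall t, tr q t -> Defs.comparable t tau -> tr w0 t) (ex_intro _ w' Hw')).
apply: NNPP => ne; apply: (Wanti w x Ww Wx ne).
exists r2; split => // t /r2q [qt ct]; exact: Hw.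
Qed.

Theorem mainTheorem2 : AxiomA inT Tle Tle_n.
Proof.
split; first by move=> n p _; split => // t.
split; first by move=> n p q r _ _ _ h1 h2; exact: Tle_n_trans h1 h2.
split; first by move=> p q _ _ [].
split; first by move=> n p q _ _; apply: Tle_n_weaken.
split; first exact: fusion.
by move=> p n W hp hW; apply: clause6.
Qed.
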